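(* For every signature $\sigma$, the formula $\bigsqcup_{\mathcal F\in\mathbb F_\sigma}\Phi^{\mathcal F}$ is satisfied by every causal team over $\sigma$, i.e. $\models^c\bigsqcup_{\mathcal F\in\mathbb F_\sigma}\Phi^{\mathcal F}$.
   Context: A signature $\sigma=(\mathrm{Dom},\mathrm{Ran})$: $\mathrm{Dom}$ nonempty finite set of variables, each with nonempty finite range $\mathrm{Ran}(X)$; $\mathbf X=\mathbf x$ abbreviates $X_1=x_1\wedge\dots\wedge X_n=x_n$ ($\mathbf x\in\prod\mathrm{Ran}(X_i)$), inconsistent if it contains $X=x,X=x'$ with $x\ne x'$. $\mathcal{CO}[\sigma]$-formulas: $\alpha::=X=x\mid\neg\alpha\mid\alpha\wedge\alpha\mid\alpha\vee\alpha\mid\mathbf X=\mathbf x\;\Box\!\!\rightarrow\alpha$; $\alpha\supset\beta$ abbreviates $\neg\alpha\vee\beta$; $\sqcup$ is the global disjunction ($T\models\varphi\sqcup\psi$ iff $T\models\varphi$ or $T\models\psi$). A system of functions $\mathcal F$: for each $V\in\mathrm{En}(\mathcal F)\subseteq\mathrm{Dom}$ parents $PA^{\mathcal F}_V\subseteq\mathrm{Dom}\setminus\{V\}$ and $\mathcal F_V:\mathrm{Ran}(PA^{\mathcal F}_V)\to\mathrm{Ran}(V)$; $\mathrm{Ex}(\mathcal F)=\mathrm{Dom}\setminus\mathrm{En}(\mathcal F)$; only recursive systems (acyclic parent graph), forming the finite set $\mathbb F_\sigma$. An assignment $s$ is compatible with $\mathcal F$ if $s(V)=\mathcal F_V(s(PA^{\mathcal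 F}_V))$ for $V\in\mathrm{En}(\mathcal F)$. A causal team $T=(T^-,\mathcal F)$ consists of $\mathcal F\in\mathbb F_\sigma$ and a set $T^-$ of assignments compatible with $\mathcal F$ (all teams with empty team component identified as $\emptyset$); causal subteams are $(S^-,\mathcal F)$ with $S^-\subseteq T^-$. For consistent $\mathbf X=\mathbf x$: $\mathcal F_{\mathbf X=\mathbf x}$ restricts $\mathcal F$ to $\mathrm{En}(\mathcal F)\setminus\mathbf X$, $s^{\mathcal F}_{\mathbf X=\mathbf x}$: $X_i\mapsto x_i$, $V\mapsto s(V)$ on $\mathrm{Ex}(\mathcal F)\setminus\mathbf X$, $V\mapsto\mathcal F_V(s^{\mathcal F}_{\mathbf X=\mathbf x}(PA^{\mathcal F}_V))$ on $\mathrm{En}(\mathcal F)\setminus\mathbf X$; $T_{\mathbf X=\mathbf x}=(\{s^{\mathcal F}_{\mathbf X=\mathbf x}:s\in T^-\},\mathcal F_{\mathbf X=\mathbf x})$. $\models^c$: $T\models X=x$ iff $s(X)=x$ for all $s\in T^-$; $T\models\neg\alpha$ iff $(\{s\},\mathcal F)\not\models\alpha$ for all $s\in T^-$; $\wedge$ classical; $T\models\varphi\vee\psi$ iff there are causal subteams $T_1,T_2$ with $T_1^-\cup T_2^-=T^-$, $T_1\models\varphi$, $T_2\models\psi$; $T\models\mathbf X=\mathbf x\;\Box\!\!\rightarrow\varphi$ iff $\mathbf X=\mathbf x$ inconsistent or $T_{\mathbf X=\mathbf x}\models\varphi$. $\mathrm{Cn}(\mathcal F)=\{V\in\mathrm{En}(\mathcal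 F):\mathcal F_V\text{ constant}\}$. With $\mathbf W_V$ listing $\mathrm{Dom}\setminus\{V\}$: $\Phi^{\mathcal F}:=\bigwedge_{V\in\mathrm{En}(\mathcal F)\setminus\mathrm{Cn}(\mathcal F)}\eta(V)\wedge\bigwedge_{V\notin\mathrm{En}(\mathcal F)\setminus\mathrm{Cn}(\mathcal F)}\xi(V)$, where $\eta(V)$ is the conjunction of all $(\mathbf W=\mathbf w\wedge PA^{\mathcal F}_V=\mathbf p)\;\Box\!\!\rightarrow V=\mathcal F_V(\mathbf p)$ ($\mathbf W$ listing $\mathrm{Dom}\setminus(PA^{\mathcal F}_V\cup\{V\})$, $\mathbf w\in\mathrm{Ran}(\mathbf W)$, $\mathbf p\in\mathrm{Ran}(PA^{\mathcal F}_V)$) and $\xi(V)$ is the conjunction of all $V=v\supset(\mathbf W_V=\mathbf w\;\Box\!\!\rightarrow V=v)$ ($v\in\mathrm{Ran}(V)$, $\mathbf w\in\mathrm{Ran}(\mathbf W_V)$). *)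

(* Defs.v *)
From mathcomp Require Import all_boot.
From Stdlib Require List.
Set Implicit Arguments.
Unset Strict Implicit.
Unset Printing Implicit Defensive.

Section CausalTeams.

(* Signature sigma = (Dom, Ran): Dom is the finite type V, Ran X a finite type. *)
Variable V : finType.
Variable Ran : V -> finType.
Hypothesis HV : 0 < #|V|.
Hypothesis HR : forall X : V, 0 < #|Ran X|.

Definition asg := {dffun forall X : V, Ran X}.

Definition lit := {X : V & Ran X}.

Inductive form :=
| Atom (X : V) (x : Ran X)
| Neg (a : form)
| And (a b : form)
| Or (a b : form)
| Cf (l : seq lit) (a : form).

Definition consistent (l : seq lit) : Prop :=
  forall p q : lit, List.In p l -> List.In q l -> tag p = tag q -> p = q.

(* Systems of functions: endogenous set, parent sets, and for each V a
   function F_V : Ran(PA_V) -> Ran(V), represented as a function of full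
   assignments depending only on the values on PA_V (see is_sysf). *)
Record sysf := Sysf {
  En : {set V};
  PA : V -> {set V};
  fn : forall W : V, asg -> Ran W
}.

Definition is_sysf (F : sysf) : Prop :=
  forall W, W \in En F ->
    W \notin PA F W /\
    (forall s s' : asg, (forall Z, Z \in PA F W -> s Z = s' Z) ->
        fn F W s = fn F W s').

Definition pedge (F : sysf) : rel V := fun Z W => (W \in En F) && (Z \in PA F W).

Definition recursive (F : sysf) : Prop :=
  forall Z W, pedge F Z W -> ~~ connect (pedge F) W Z.

Definition in_Fsigma (F : sysf) : Prop := is_sysf F /\ recursive F.

Definition compatible (F : sysf) (s : asg) : Prop :=
  forall W, W \in En F -> s W = fn F W s.

Definition causal_team (F : sysf) (T : asg -> Prop) : Prop :=
  forall s, T s -> compatible F s.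

Definition in_ante (l : seq lit) (W : V) : bool := has (fun p => tag p == W) l.

Definition interv_sys (F : sysf) (l : seq lit) : sysf :=
  Sysf [set W in En F | ~~ in_ante l W] (PA F) (fn F).

(* s^F_{X=x}, characterised by its defining equations (for recursive F
   these determine it uniquely). *)
Definition interv_asg (F : sysf) (l : seq lit) (s s' : asg) : Prop :=
  (forall p, List.In p l -> s' (tag p) = tagged p) /\
  (forall W, W \notin En F -> ~~ in_ante l W -> s' W = s W) /\
  (forall W, W \in En F -> ~~ in_ante l W -> s' W = fn F W s').

Definition interv_team (F : sysf) (l : seq lit) (T : asg -> Prop) : asg -> Prop :=
  fun s' => exists s, T s /\ interv_asg F l s s'.

Fixpoint sat (F : sysf) (T : asg -> Prop) (phi : form) : Prop :=
  match phi with
  | Atom X x => forall s, T s -> s X = x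
  | Neg a => forall s, T s -> ~ sat F (fun t => t = s) a
  | And a b => sat F T a /\ sat F T b
  | Or a b => exists T1 T2 : asg -> Prop,
      (forall s, T1 s -> T s) /\ (forall s, T2 s -> T s) /\
      (forall s, T s -> T1 s \/ T2 s) /\ sat F T1 a /\ sat F T2 b
  | Cf l a => ~ consistent l \/ sat (interv_sys F l) (interv_team F l T) a
  end.

Definition Imp (a b : form) : form := Or (Neg a) b.

Definition v0 : V := @enum_val V predT (Ordinal HV).
Definition r0 (X : V) : Ran X := @enum_val (Ran X) predT (Ordinal (HR X)).

(* A tautology, used only as the value of an empty conjunction. *)
Definition top : form := Or (Atom (r0 v0)) (Neg (Atom (r0 v0))).

Definition bigAnd (l : seq form) : form :=
  if l is a :: l' then foldr And a l' else top.

Definition ante_except (W0 : V) (t : asg) : seq lit :=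
  [seq Tagged Ran (t W) | W <- enum V & W != W0].

Definition constantb (F : sysf) (W : V) : bool :=
  [forall s : asg, [forall s' : asg, fn F W s == fn F W s']].

Definition in_EnCn (F : sysf) (W : V) : bool := (W \in En F) && ~~ constantb F W.

(* eta(V): all (W = w /\ PA_V = p) []-> V = F_V(p); the antecedent
   W = w /\ PA_V = p ranges over all assignments to Dom \ {V}. *)
Definition eta (F : sysf) (W0 : V) : form :=
  bigAnd [seq Cf (ante_except W0 t) (Atom (fn F W0 t)) | t <- enum asg].

Definition xi (W0 : V) : form :=
  bigAnd [seq Imp (Atom v) (Cf (ante_except W0 t) (Atom v))
         | v <- enum (Ran W0), t <- enum asg].

Definition Phi (F : sysf) : form :=
  And (bigAnd [seq eta F W | W <- enum V & in_EnCn F W])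
      (bigAnd [seq xi W | W <- enum V & ~~ in_EnCn F W]).

End CausalTeams.

(* Main.v *)
Require Import Defs.
From mathcomp Require Import all_boot.
From Stdlib Require List.

Section Aux.
Variable V : finType.
Variable Ran : V -> finType.

Lemma sat_em (F : sysf Ran) (T : asg Ran -> Prop) (X : V) (x : Ran X) :
  sat F T (Or (@Atom V Ran X x) (Neg (@Atom V Ran X x))).
Proof.
exists (fun s => T s /\ s X = x), (fun s => T s /\ s X <> x).
split; first by move=> s [].
split; first by move=> s [].
split; first by move=> s Ts; case: (eqVneq (s X) x) => H; [left|right]; split => //; apply/eqP.
split; first by move=> s [].
move=> s [_ Hs] H; apply: Hs; exact: (H s erefl).
Qed.

Lemma sat_bigAnd (F : sysf Ran) (T : asg Ran -> Prop) (a0 : form Ran) (l : seq (form Ran)) :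
  sat F T a0 ->
  (forall a, List.In a l -> sat F T a) ->
  sat F T (match l with [::] => a0 | a :: l' => foldr (@And _ _) a l' end).
Proof.
move=> H0; case: l => [//|a l] H.
elim: l H => [|b l IH] H /=; first by apply: H; left.
split; first by apply: H; right; left.
apply: IH => c [<-|Hc]; apply: H; [left|right; right] => //.
Qed.

Lemma In_mem (T : eqType) (x : T) (s : seq T) : x \in s -> List.In x s.
Proof.
elim: s => [//|y s IH]; rewrite inE => /orP[/eqP->|/IH H]; [left|right] => //.
Qed.

Lemma In_map_ex (A B : Type) (f : A -> B) (s : seq A) (b : B) :
  List.In b (map f s) -> exists a, b = f a.
Proof.
elim: s => [//|y s IH] /= [<-|H]; first by exists y.
exact: IH.
Qed.

Lemma In_allpairs_ex (A B C : Type) (f : A -> B -> C) (s : seq A) (t : seq B) (c : C) :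
  List.In c [seq f x y | x <- s, y <- t] -> exists a b, c = f a b.
Proof.
elim: s => [//|y s IH] /=; move/List.in_app_iff => [H|H]; last exact: IH.
have [b ->] := In_map_ex _ _ _ _ _ H; by exists y, b.
Qed.

Lemma In_map_mem (A : eqType) (B : Type) (f : A -> B) (s : seq A) (b : B) :
  List.In b (map f s) -> exists a, a \in s /\ b = f a.
Proof.
elim: s => [//|y s IH] /= [<-|H]; first by exists y; rewrite inE eqxx.
have [a [Ha ->]] := IH H; exists a; by rewrite inE Ha orbT.
Qed.

Lemma ante_notin (W0 : V) (t : asg Ran) : ~~ in_ante (ante_except W0 t) W0.
Proof.
rewrite /in_ante /ante_except has_map; apply/hasPn => W.
by rewrite mem_filter => /andP[H _].
Qed.

Lemma ante_in (W0 : V) (t : asg Ran) (Z : V) : Z != W0 ->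
  List.In (Tagged Ran (t Z)) (ante_except W0 t).
Proof.
move=> HZ; apply: In_mem; rewrite /ante_except.
apply/mapP; exists Z => //; by rewrite mem_filter HZ mem_enum.
Qed.

End Aux.

Theorem corollary3p6 (V : finType) (Ran : V -> finType)
    (HV : 0 < #|V|) (HR : forall X : V, 0 < #|Ran X|)
    (F : sysf Ran) (T : asg Ran -> Prop) :
  in_Fsigma F -> causal_team F T ->
  exists G : sysf Ran, in_Fsigma G /\ sat F T (Phi HV HR G).
Proof.
move=> [Hsys Hrec] Hct; exists F; split; first by [].
have Htop : forall F' T', sat F' T' (top HV HR) by move=> F' T'; exact: sat_em.
split.
- apply: sat_bigAnd => // a /(In_map_mem _ _ _ _ _) [W0 [HW0 ->]].
  rewrite mem_filter in HW0; case/andP: HW0 => /andP[HEn _] _.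
  apply: sat_bigAnd => // b /(In_map_ex _ _ _ _ _) [t ->].
  right => s' [s [Ts [H1 [H2 H3]]]].
  rewrite (H3 _ HEn (ante_notin _ _ _ _)).
  have [_ Hf] := Hsys W0 HEn.
  apply: Hf => Z HZ.
  have HZ0 : Z != W0.
    apply/eqP => E; move: HZ; rewrite E; have [Hn _] := Hsys W0 HEn; by rewrite (negbTE Hn).
  exact: (H1 _ (ante_in _ _ _ t _ HZ0)).
- apply: sat_bigAnd => // a /(In_map_mem _ _ _ _ _) [W0 [HW0 ->]].
  rewrite mem_filter in HW0; case/andP: HW0 => HW0 _.
  apply: sat_bigAnd => // b /(In_allpairs_ex _ _ _ _ _ _ _) [v [t ->]].
  exists (fun s => T s /\ s W0 <> v), (fun s => T s /\ s W0 = v).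
  split; first by move=> s [].
  split; first by move=> s [].
  split; first by move=> s Ts; case: (eqVneq (s W0) v) => H; [right|left]; split => //; apply/eqP.
  split; first by move=> s [_ Hs] H; apply: Hs; exact: (H s erefl).
  right => s' [s [[Ts Hsv] [H1 [H2 H3]]]].
  rewrite -Hsv.
  case HEn: (W0 \in En F).
  + move: HW0; rewrite /in_EnCn HEn /= negbK => /forallP Hc.
    rewrite (H3 _ HEn (ante_notin _ _ _ _)) (Hct s Ts W0 HEn).
    exact/eqP/(forallP (Hc s') s).
  + exact: H2 (negbT HEn) (ante_notin _ _ _ _).
Qed.
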